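(* Let $V$ be an amenable collection of vectors subordinate to a $\mathbb{Q}$-nef partition $E_1,\dots,E_{k+1}$ of a complete fan $\Sigma$. Let $C$ be a cone of $\Sigma$ such that $C\cap M_V$ contains a nonzero point. Then some primitive ray generator of $C$ is contained in $E_{k+1}$.
   Context: $M$ lattice of rank $n$, $N=\mathrm{Hom}(M,\mathbb{Z})$; $\Sigma$ complete fan of strictly convex rational cones in $M_\mathbb{R}$, $\Sigma[1]$ primitive ray generators. $\mathbb{Q}$-nef partition: ordered partition $\Sigma[1]=E_1\sqcup\dots\sqcup E_{k+1}$ with convex rational $\Sigma$-piecewise linear functions $\varphi_i$ with $\varphi_i(\rho)=\delta_{ij}$ on $E_j$. Amenable collection: $V=\{v_1,\dots,v_k\}\subset N$ with $\langle v_i,\rho\rangle=-1$ on $E_i$, $\ge0$ on $E_j$ for $i<j\le k+1$, $=0$ on $E_j$ for $j<i$. $M_V=\{u\in M_\mathbb{R}:\langle v_i,u\rangle=0\ \forall i\}$. *)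

(* Defs.v *)
(* M_R = N_R = R^n as row vectors over an abstract R : realType,
   M = N = Z^n (integer row vectors), pairing <v,u> = dot product. *)
From mathcomp Require Import all_boot all_order all_algebra.
From mathcomp Require Import reals.
Set Implicit Arguments.
Unset Strict Implicit.
Unset Printing Implicit Defensive.
Import GRing.Theory Num.Theory.
Local Open Scope ring_scope.

Section ToricDefs.
Variables (R : realType) (n : nat).

Local Notation vec := 'rV[R]_n.

Definition dot (v u : vec) : R := \sum_(i < n) v 0 i * u 0 i.

Definition lattice (u : vec) : Prop :=
  exists z : 'rV[int]_n, u = map_mx (fun x : int => x%:~R) z.

Definition primitive (u : vec) : Prop :=
  lattice u /\ forall d : nat, (1 < d)%N -> ~ lattice ((d%:R)^-1 *: u).

Definition cone_gen (S : seq vec) (x : vec) : Prop :=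
  exists a : 'I_(size S) -> R,
    (forall j, 0 <= a j) /\ x = \sum_(j < size S) a j *: S`_j.

Definition same_set (C D : vec -> Prop) : Prop := forall x, C x <-> D x.

Definition rational_polyhedral_cone (C : vec -> Prop) : Prop :=
  exists S : seq vec, (forall u, u \in S -> lattice u) /\ same_set C (cone_gen S).

Definition strongly_convex (C : vec -> Prop) : Prop :=
  forall x, C x -> C (- x) -> x = 0.

Definition is_face (C F : vec -> Prop) : Prop :=
  exists m : vec, (forall x, C x -> 0 <= dot m x) /\
    same_set F (fun x => C x /\ dot m x = 0).

Definition in_fan (I : finType) (cone : I -> vec -> Prop) (F : vec -> Prop) : Prop :=
  exists j, same_set (cone j) F.

Definition is_fan (I : finType) (cone : I -> vec -> Prop) : Prop :=
  [/\ forall j, rational_polyhedral_cone (cone j) /\ strongly_convex (cone j),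
      forall j F, is_face (cone j) F -> in_fan cone F &
      forall j1 j2, is_face (cone j1) (fun x => cone j1 x /\ cone j2 x) /\
                    is_face (cone j2) (fun x => cone j1 x /\ cone j2 x)].

Definition complete_fan (I : finType) (cone : I -> vec -> Prop) : Prop :=
  is_fan cone /\ forall x, exists j, cone j x.

Definition ray_gen (I : finType) (cone : I -> vec -> Prop) (rho : vec) : Prop :=
  primitive rho /\ in_fan cone (cone_gen [:: rho]).

Definition rational_PL (I : finType) (cone : I -> vec -> Prop) (phi : vec -> R) : Prop :=
  forall j, exists q : 'rV[rat]_n,
    forall x, cone j x -> phi x = dot (map_mx (fun r : rat => ratr r) q) x.

Definition convex_fun (phi : vec -> R) : Prop :=
  forall (x y : vec) (t : R), 0 <= t <= 1 ->
    phi (t *: x + (1 - t) *: y) <= t * phi x + (1 - t) * phi y.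

(* Q-nef partition: part rho = i (i : 'I_k.+1) means rho \in E_{i+1};
   E_{k+1} corresponds to ord_max. *)
Definition Qnef_partition (I : finType) (cone : I -> vec -> Prop) (k : nat)
    (part : vec -> 'I_k.+1) : Prop :=
  exists phi : 'I_k.+1 -> vec -> R,
    forall i, [/\ convex_fun (phi i), rational_PL cone (phi i) &
      forall rho, ray_gen cone rho -> phi i rho = (if part rho == i then 1 else 0)].

(* amenable collection: v i (i : 'I_k) is v_{i+1}, subordinate to E_{i+1} *)
Definition amenable (I : finType) (cone : I -> vec -> Prop) (k : nat)
    (part : vec -> 'I_k.+1) (v : 'I_k -> vec) : Prop :=
  (forall i, lattice (v i)) /\
  forall (i : 'I_k) rho, ray_gen cone rho ->
    [/\ (nat_of_ord (part rho) = nat_of_ord i -> dot (v i) rho = -1),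
        ((nat_of_ord i < part rho)%N -> 0 <= dot (v i) rho) &
        ((part rho < nat_of_ord i)%N -> dot (v i) rho = 0)].

Definition in_MV (k : nat) (v : 'I_k -> vec) (u : vec) : Prop :=
  forall i, dot (v i) u = 0.

End ToricDefs.

(* Main.v *)
Require Import Defs.
From mathcomp Require Import all_boot all_order all_algebra.
From mathcomp Require Import reals.
From Stdlib Require Import Classical.
From mathcomp Require Import ring lra zify.
Set Implicit Arguments.
Unset Strict Implicit.
Import Order.TTheory GRing.Theory Num.Theory.
Local Open Scope ring_scope.

Section Aux.
Variables (R : realType) (n : nat).
Local Notation vec := 'rV[R]_n.

Lemma dotDr (v x y : vec) : dot v (x + y) = dot v x + dot v y.
Proof. by rewrite /dot -big_split /=; apply: eq_bigr => i _; rewrite mxE mulrDr. Qed.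
Lemma dotDl (v x y : vec) : dot (x + y) v = dot x v + dot y v.
Proof. by rewrite /dot -big_split /=; apply: eq_bigr => i _; rewrite mxE mulrDl. Qed.
Lemma dotZr (v x : vec) c : dot v (c *: x) = c * dot v x.
Proof. by rewrite /dot mulr_sumr; apply: eq_bigr => i _; rewrite mxE mulrCA. Qed.
Lemma dotZl (v x : vec) c : dot (c *: x) v = c * dot x v.
Proof. by rewrite /dot mulr_sumr; apply: eq_bigr => i _; rewrite mxE mulrA. Qed.
Lemma dotNr (v x : vec) : dot v (- x) = - dot v x.
Proof. by rewrite -scaleN1r dotZr mulN1r. Qed.
Lemma dotNl (v x : vec) : dot (- x) v = - dot x v.
Proof. by rewrite -scaleN1r dotZl mulN1r. Qed.
Lemma dotBr (v x y : vec) : dot v (x - y) = dot v x - dot v y.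
Proof. by rewrite dotDr dotNr. Qed.
Lemma dotBl (v x y : vec) : dot (x - y) v = dot x v - dot y v.
Proof. by rewrite dotDl dotNl. Qed.
Lemma dot0r (v : vec) : dot v 0 = 0.
Proof. by rewrite -(scale0r 0) dotZr mul0r. Qed.
Lemma dot_sumr (v : vec) m (F : 'I_m -> vec) :
  dot v (\sum_(i < m) F i) = \sum_(i < m) dot v (F i).
Proof.
elim/big_rec2: _ => [|i y1 y2 _ <-]; first by rewrite dot0r.
by rewrite dotDr.
Qed.
Lemma dot_suml (v : vec) m (P : pred 'I_m) (F : 'I_m -> vec) :
  dot (\sum_(i < m | P i) F i) v = \sum_(i < m | P i) dot (F i) v.
Proof.
elim/big_rec2: _ => [|i y1 y2 _ <-]; last by rewrite dotDl.
by rewrite -(scale0r 0) dotZl mul0r.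
Qed.

Definition cg m (f : 'I_m -> vec) (x : vec) : Prop :=
  exists a : 'I_m -> R, (forall j, 0 <= a j) /\ x = \sum_(j < m) a j *: f j.

Lemma cg0 m (f : 'I_m -> vec) : cg f 0.
Proof. exists (fun _ => 0); split => // ; by rewrite big1 // => i _; rewrite scale0r. Qed.
Lemma cgD m (f : 'I_m -> vec) x y : cg f x -> cg f y -> cg f (x + y).
Proof.
move=> [a [a0 ->]] [b [b0 ->]]; exists (fun j => a j + b j); split.
  by move=> j; rewrite addr_ge0.
by rewrite -big_split; apply: eq_bigr => i _; rewrite scalerDl.
Qed.
Lemma cgZ m (f : 'I_m -> vec) c x : 0 <= c -> cg f x -> cg f (c *: x).
Proof.
move=> c0 [a [a0 ->]]; exists (fun j => c * a j); split.
  by move=> j; rewrite mulr_ge0.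
by rewrite scaler_sumr; apply: eq_bigr => i _; rewrite scalerA.
Qed.
Lemma cg_gen m (f : 'I_m -> vec) i : cg f (f i).
Proof.
exists (fun j => (j == i)%:R); split; first by move=> j; rewrite ler0n.
rewrite (bigD1 i) //= eqxx scale1r big1 ?addr0 // => j /negbTE ->.
by rewrite scale0r.
Qed.
Lemma cg_mono m p (f : 'I_m -> vec) (g : 'I_p -> vec) :
  (forall i, cg g (f i)) -> forall x, cg f x -> cg g x.
Proof.
move=> H x [a [a0 ->]].
elim/big_rec: _ => [|i y _ Hy]; first exact: cg0.
by apply: cgD => //; apply: cgZ.
Qed.

Lemma farkas m : forall (f : 'I_m -> vec) (b : vec),
  cg f b \/ exists y, (forall i, 0 <= dot y (f i)) /\ dot y b < 0.
Proof.
elim: m => [|m IH] f b.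
  have [->|b0] := eqVneq b 0; first by left; apply: cg0.
  right; exists (- b); split; first by case.
  rewrite dotNl oppr_lt0 /dot.
  have -> : \sum_(i < n) b 0 i * b 0 i = \sum_(i < n) (b 0 i) ^+ 2.
    by apply: eq_bigr => i _; rewrite expr2.
  rewrite lt_def sumr_ge0 ?andbT; last by move=> i _; rewrite sqr_ge0.
  rewrite psumr_eq0 => [|i _]; last by rewrite sqr_ge0.
  apply/negP => /allP H; apply/negP: b0; apply/negPn/eqP/rowP => i; rewrite mxE.
  by have := H i (mem_index_enum _); rewrite sqrf_eq0 => /eqP.
pose g := fun i : 'I_m => f (lift ord_max i).
pose am := f ord_max.
have gf : forall i, cg f (g i) by move=> i; apply: cg_gen.
have [gb|[y' [y'g y'b]]] := IH g b.
  by left; apply: cg_mono gb.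
have [cpos|cneg] := leP 0 (dot y' am).
  right; exists y'; split => // i.
  by case: (unliftP ord_max i) => [j ->|->] //; exact: (y'g j).
set c := dot y' am in cneg.
pose g' := fun i => g i - (dot y' (g i) / c) *: am.
pose b' := b - (dot y' b / c) *: am.
have cf : cg f am by apply: cg_gen.
have c0 : c != 0 by rewrite lt_eqF.
have [gb|[y'' [y''g y''b]]] := IH g' b'.
  left.
  have -> : b = b' + (dot y' b / c) *: am by rewrite /b' subrK.
  apply: cgD; last by apply: cgZ => //; rewrite mulr_le0 ?invr_le0 ?ltW.
  apply: cg_mono gb => i; rewrite /g' -scaleNr; apply: cgD => //; apply: cgZ => //.
  by rewrite oppr_ge0; apply: mulr_ge0_le0; [exact: y'g | rewrite invr_le0 ltW].
right; exists (y'' - (dot y'' am / c) *: y'); split.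
  move=> i; case: (unliftP ord_max i) => [j ->|->].
    have := y''g j; rewrite /g' dotBr dotZr dotBl dotZl => H.
    rewrite /g -/(g j); move: H; set A := dot y'' (g j); set B := dot y' (g j); set D := dot y'' am.
    have E : D / c * B = B / c * D by ring.
    by rewrite E => H.
  by rewrite dotBl dotZl -/am -/c mulfVK // subrr.
rewrite dotBl dotZl; move: y''b; rewrite /b' dotBr dotZr.
set A := dot y'' b; set B := dot y' b; set D := dot y'' am.
have E : D / c * B = B / c * D by ring.
by rewrite E.
Qed.

Definition cgz m (f : 'I_m -> vec) j (x : vec) : Prop :=
  exists a : 'I_m -> R, [/\ forall i, 0 <= a i, a j = 0 & x = \sum_(i < m) a i *: f i].

Lemma sum_delta m (f : 'I_m -> vec) s : \sum_(i < m) (i == s)%:R *: f i = f s.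
Proof.
rewrite (bigD1 s) //= eqxx scale1r big1 ?addr0 // => j /negbTE ->.
by rewrite scale0r.
Qed.

Lemma sum_if m (F : 'I_m -> vec) s :
  \sum_(i < m) (if i == s then F i else 0) = F s.
Proof. by rewrite -big_mkcond big_pred1_eq. Qed.

Section Expose.
Variables (m : nat) (f : 'I_m -> vec).
Hypothesis hsc : forall x, cg f x -> cg f (- x) -> x = 0.
Hypothesis hmin : forall j, ~ cgz f j (f j).

Lemma gen_nz j : f j != 0.
Proof.
apply/eqP => fj0; apply: (hmin (j := j)); exists (fun _ => 0); split => //.
by rewrite fj0 big1 // => i _; rewrite scale0r.
Qed.

Lemma sep s t : s != t ->
  exists y, [/\ dot y (f t) = 0, forall i, 0 <= dot y (f i) & 0 < dot y (f s)].
Proof.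
move=> st.
pose h := fun i => if i == s then - f t else f i.
have [[c [c0 E]]|[y [yh ys]]] := farkas h (- f s); last first.
  have yt1 := yh t; rewrite /h eq_sym (negbTE st) in yt1.
  have yt2 := yh s; rewrite /h eqxx dotNr in yt2.
  rewrite dotNr in ys.
  exists y; split; first by lra.
    move=> i; have := yh i; rewrite /h; case: eqP => [->|_] //; lra.
  lra.
pose c'' := fun i => if (i == s) || (i == t) then 0 else c i.
have c''0 : forall i, 0 <= c'' i by move=> i; rewrite /c''; case: ifP.
pose w := \sum_(i < m) c'' i *: f i.
have wC : cg f w by exists c''.
have E2 : - f s = w + (c t - c s) *: f t.
  rewrite E.
  have -> : \sum_(i < m) c i *: h i = \sum_(i < m) (c'' i *: f i +
     (if i == t then c i *: f i else 0) - (if i == s then c s *: f t else 0)).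
    apply: eq_bigr => i _; rewrite /h /c''.
    case: (eqVneq i s) => [->|i_s] /=.
      by rewrite (negbTE st) scale0r !add0r scalerN.
    case: (eqVneq i t) => [->|i_t] /=; first by rewrite scale0r add0r subr0.
    by rewrite addr0 subr0.
  by rewrite sumrB big_split /= !sum_if scalerBl addrA.
have [dpos|dneg] := leP 0 (c t - c s).
  have : f s = 0; last by move=> fs0; have := gen_nz s; rewrite fs0 eqxx.
  apply: hsc; first exact: cg_gen.
  by rewrite E2; apply: cgD => //; apply: cgZ => //; apply: cg_gen.
exfalso; apply: (hmin (j := t)).
exists (fun i => (- (c t - c s))^-1 * (c'' i + (i == s)%:R)); split.
- move=> i; rewrite mulr_ge0 ?addr_ge0 ?ler0n //.
  by rewrite invr_ge0; lra.
- by rewrite /c'' eqxx orbT add0r eq_sym (negbTE st) mulr0.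
- have -> : \sum_(i < m) (- (c t - c s))^-1 * (c'' i + (i == s)%:R) *: f i =
     (- (c t - c s))^-1 *: (w + f s).
    rewrite -sum_delta -big_split scaler_sumr /=; apply: eq_bigr => i _.
    by rewrite -scalerA scalerDl.
  have -> : w + f s = (- (c t - c s)) *: f t.
    by rewrite -[f s]opprK E2 opprD addrA subrr add0r scaleNr.
  by rewrite scalerA mulVf ?scale1r // oppr_eq0 lt_eqF.
Qed.

Lemma expose t : exists M, [/\ dot M (f t) = 0, forall i, 0 <= dot M (f i) &
  forall i, i != t -> 0 < dot M (f i)].
Proof.
have : forall s, exists y, s != t ->
    [/\ dot y (f t) = 0, forall i, 0 <= dot y (f i) & 0 < dot y (f s)].
  move=> s; case: (eqVneq s t) => [->|st]; first by exists 0 => /negP.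
  by have [y Hy] := sep st; exists y.
case/fin_all_exists => y Hy.
exists (\sum_(s < m | s != t) y s); split.
- by rewrite dot_suml big1 // => s st; case: (Hy s st).
- by move=> i; rewrite dot_suml sumr_ge0 // => s st; case: (Hy s st).
- move=> i it; rewrite dot_suml (bigD1 i) //=; case: (Hy i it) => _ _ pos.
  have : 0 <= \sum_(s < m | (s != t) && (s != i)) dot (y s) (f i).
    by apply: sumr_ge0 => s /andP[st _]; case: (Hy s st).
  lra.
Qed.
End Expose.

Lemma sum_pos (z : 'rV[int]_n) : z != 0 -> (0 < \sum_(i < n) `|z ord0 i|)%N.
Proof.
move=> z0.
have [i zi] : exists i, z 0 i != 0.
  apply: NNPP => H; apply/negP: z0; apply/negPn/eqP/rowP => i; rewrite mxE.
  by apply/eqP; apply: NNPP => Hi; apply: H; exists i; apply/negP.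
rewrite (bigD1 i) //=; move: zi; rewrite -absz_gt0; case: (`|z ord0 i|%N) => //.
Qed.

Lemma prim_aux N : forall z : 'rV[int]_n, z != 0 -> (\sum_(i < n) `|z ord0 i| <= N)%N ->
  exists c : R, 0 < c /\ primitive (c *: map_mx (fun x : int => x%:~R) z).
Proof.
elim: N => [|N IH] z z0 hle.
  by have := sum_pos z0; rewrite leqn0 in hle; rewrite (eqP hle).
have [P|nP] := classic (primitive (map_mx (fun x : int => (x%:~R : R)) z)).
  by exists 1; rewrite scale1r ltr01.
have [d [d1 [z' hz']]] : exists d : nat, (1 < d)%N /\
    lattice ((d%:R)^-1 *: map_mx (fun x : int => (x%:~R : R)) z).
  apply: NNPP => H; apply: nP; split; first by exists z.
  by move=> d d1 L; apply: H; exists d.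
have dR : (d%:R : R) != 0 by rewrite pnatr_eq0 -lt0n ltnW.
have zz : forall i, z 0 i = d%:Z * z' 0 i.
  move=> i; apply: (@intr_inj R).
  have := hz'; move/rowP/(_ i); rewrite !mxE => E.
  by rewrite intrM -E mulrA mulfV // mul1r.
have z'0 : z' != 0.
  apply/negP => /eqP z'0; apply/negP: z0; apply/negPn/eqP/rowP => i.
  by rewrite zz z'0 !mxE mulr0.
have hs : (\sum_(i < n) `|z ord0 i| = d * \sum_(i < n) `|z' ord0 i|)%N.
  by rewrite big_distrr /=; apply: eq_bigr => i _; rewrite zz abszM.
have := sum_pos z'0; move: hle; rewrite hs => hle hpos.
have [c [c0 Pc]] := IH z' z'0 (ltac:(nia)).
exists (c / d%:R); split; first by rewrite divr_gt0 // ltr0n ltnW.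
by rewrite -hz' scalerA mulrC -scalerA in Pc; rewrite mulrC -scalerA.
Qed.


Lemma prim_exists (u : vec) : lattice u -> u != 0 ->
  exists c : R, 0 < c /\ primitive (c *: u).
Proof.
move=> [z ->] u0; apply: (prim_aux (N := \sum_(i < n) `|z ord0 i|)) => //.
by apply/negP => /eqP z0; apply/negP: u0; apply/negPn/eqP/rowP => i; rewrite z0 !mxE.
Qed.

Lemma cone1P (rho x : vec) : cone_gen [:: rho] x <-> exists c, 0 <= c /\ x = c *: rho.
Proof.
split.
  by move=> [a [a0 ->]]; exists (a ord0); rewrite big_ord1.
move=> [c [c0 ->]]; exists (fun _ => c); split => //.
by rewrite big_ord1.
Qed.

Lemma minimal_nat (P : nat -> Prop) :
  (exists m, P m) -> exists m, P m /\ forall j, (j < m)%N -> ~ P j.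
Proof.
move=> [m Pm]; elim: m {-2}m (leqnn m) Pm => [|N IH] m hm Pm.
  by exists m; split => // j; rewrite (leqn0 _) in hm; rewrite (eqP hm).
have [[j [jm Pj]]|H] := classic (exists j, (j < m)%N /\ P j).
  by apply: (IH j) => //; rewrite -ltnS; exact: leq_trans jm hm.
exists m; split => // j jm Pj; apply: H; by exists j.
Qed.

End Aux.

Theorem lemma2p11 (R : realType) (n k : nat) (I : finType)
    (cone : I -> 'rV[R]_n -> Prop) (part : 'rV[R]_n -> 'I_k.+1)
    (v : 'I_k -> 'rV[R]_n) (C : I) :
  complete_fan cone ->
  Qnef_partition cone part ->
  amenable cone part v ->
  (exists u : 'rV[R]_n, [/\ cone C u, u <> 0 & in_MV v u]) ->
  exists rho : 'rV[R]_n, [/\ ray_gen cone rho, cone C rho & part rho = ord_max].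
Proof.
move=> [[hcones hfaces _] _] _ [vlat hv] [u [Cu u0 uMV]].
have [[S [Slat hS]] hsc] := hcones C.
pose P := fun m => exists f : 'I_m -> 'rV[R]_n,
  (forall i, lattice (f i) /\ cone C (f i)) /\ (forall x, cone C x -> cg f x).
have [m [[f [hfl hcov]] hmin']] : exists m, P m /\ forall j, (j < m)%N -> ~ P j.
  apply: minimal_nat; exists (size S), (fun j => S`_j); split.
    move=> i; split; first by apply: Slat; apply: mem_nth.
    by apply/hS; apply: (@cg_gen _ _ _ (fun j : 'I_(size S) => S`_j)).
  by move=> x /hS.
have hCcg : forall x, cone C x <-> cg f x.
  move=> x; split; first exact: hcov.
  move=> hx; apply/hS.
  apply: (@cg_mono _ _ _ _ f (fun j : 'I_(size S) => S`_j)) hx => i.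
  by apply/hS; case: (hfl i).
have hsc' : forall x, cg f x -> cg f (- x) -> x = 0.
  by move=> x /hCcg h1 /hCcg h2; apply: hsc.
have hmin : forall j, ~ cgz f j (f j).
  move=> j [a [a0 aj E]].
  case: m f j a hfl hcov hmin' hCcg hsc' a0 aj E => [|m'] f j; first by case: j.
  move=> a hfl hcov hmin' hCcg hsc' a0 aj E.
  apply: (hmin' m' (ltnSn _)); exists (fun i => f (lift j i)); split.
    by move=> i; apply: hfl.
  move=> x /hcov; apply: cg_mono => i.
  case: (unliftP j i) => [i' ->|->]; first exact: (@cg_gen _ _ _ (fun i => f (lift j i))).
  rewrite E (bigD1_ord j) //= aj scale0r add0r.
  by exists (fun i => a (lift j i)); split.
have hray : forall t, exists p : 'rV[R]_n * R,
    [/\ ray_gen cone p.1, cone C p.1, 0 < p.2 & f t = p.2 *: p.1].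
  move=> t.
  have [c [c0 Pc]] := prim_exists (proj1 (hfl t)) (gen_nz hmin t).
  have [M [Mt Mge Mgt]] := expose hsc' hmin t.
  have cC : cone C (c *: f t) by apply/hCcg; apply: cgZ; [exact: ltW|exact: cg_gen].
  exists (c *: f t, c^-1); split => //=; last first.
  - by rewrite scalerA mulVf ?scale1r // gt_eqF.
  - by rewrite invr_gt0.
  split => //; apply: (hfaces C); exists M; split.
    move=> x /hCcg [a [a0 ->]]; rewrite dot_sumr sumr_ge0 // => i _.
    by rewrite dotZr mulr_ge0.
  move=> x; split.
    move/cone1P => [c' [c'0 ->]]; split; first by apply/hCcg; apply: cgZ => //; apply/hCcg.
    by rewrite !dotZr Mt !mulr0.
  move=> [/hCcg [a [a0 xE]] Mx]; apply/cone1P.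
  have Hz : forall i, a i * dot M (f i) = 0.
    move=> i; apply: (@psumr_eq0P _ _ xpredT (fun i => a i * dot M (f i))) => //.
      by move=> j _; rewrite mulr_ge0.
    rewrite (_ : \sum_(i | xpredT i) _ = dot M x) // xE dot_sumr.
    by apply: eq_bigr => j _; rewrite dotZr.
  have ai : forall i, i != t -> a i = 0.
    move=> i it; have := Hz i; move/eqP; rewrite mulf_eq0 => /orP[/eqP //|].
    by rewrite gt_eqF // Mgt.
  exists (a t / c); split; first by rewrite divr_ge0 // ltW.
  rewrite xE (bigD1 t) //= big1 ?addr0; last by move=> i /ai ->; rewrite scale0r.
  by rewrite scalerA mulfVK // gt_eqF.
have [pr Hpr] := fin_all_exists hray.
apply: NNPP => H.
have hpart : forall i, (part (pr i).1 < k)%N.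
  move=> i; case: (Hpr i) => r1 r2 _ _.
  have := ltn_ord (part (pr i).1); rewrite ltnS leq_eqVlt => /orP[/eqP e|//].
  exfalso; apply: H; exists (pr i).1; split => //; apply: val_inj => /=; exact: e.
have [a [a0 uE]] := hcov u Cu.
have [i0 ai0] : exists i0, 0 < a i0.
  apply: NNPP => H2; apply: u0; rewrite uE big1 // => i _.
  have : ~ 0 < a i by move=> h; apply: H2; exists i.
  have := a0 i; rewrite le_eqVlt => /orP[/eqP <- _|h //]; first by rewrite scale0r.
case: (@arg_maxnP _ i0 (fun i => 0 < a i) (fun i => nat_of_ord (part (pr i).1)) ai0) => ist aist istmax.
pose iv : 'I_k := Ordinal (hpart ist).
have T : forall i, a i * ((pr i).2 * dot (v iv) (pr i).1) <= 0 /\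
    (i = ist -> a i * ((pr i).2 * dot (v iv) (pr i).1) < 0).
  move=> i; case: (Hpr i) => r1 _ g0 _.
  have [ai|ai] := leP (a i) 0.
    have -> : a i = 0 by apply/eqP; rewrite eq_le ai a0.
    by rewrite mul0r; split => // ie; move: aist ai; rewrite -ie; lra.
  have hm := istmax i ai.
  have [e|lt] := eqVneq (nat_of_ord (part (pr i).1)) (nat_of_ord (part (pr ist).1)).
    case: (hv iv _ r1) => h1 _ _; rewrite h1 //.
    rewrite mulrN1 mulrN; split => [|_]; first by rewrite oppr_le0 mulr_ge0 ?ltW.
    by rewrite oppr_lt0 mulr_gt0.
  have lt' : (part (pr i).1 < iv)%N by rewrite /= ltn_neqAle lt; exact: hm.
  case: (hv iv _ r1) => _ _ h3; rewrite h3 // mulr0 mulr0; split => // ie.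
  by move: lt; rewrite ie eqxx.
have := uMV iv; rewrite uE dot_sumr.
have -> : \sum_(i < m) dot (v iv) (a i *: f i) =
   \sum_(i < m) a i * ((pr i).2 * dot (v iv) (pr i).1).
  by apply: eq_bigr => i _; case: (Hpr i) => _ _ _ ->; rewrite !dotZr.
rewrite (bigD1 ist) //=.
have : \sum_(i < m | i != ist) a i * ((pr i).2 * dot (v iv) (pr i).1) <= 0.
  by apply: sumr_le0 => i _; case: (T i).
have := (T ist).2 erefl.
lra.
Qed.
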